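(* Let $k$ be a field, $X$ a finite non-empty set, and for every $a\in X$ let $\sigma_a,\tau_a:X\to X$ be maps with each $\sigma_a$ bijective; let ${\cal A}$ be the special set-theoretic Yang–Baxter algebra of these data. Suppose $(X,+,\circ)$ is a skew brace and, for all $a,b\in X$, \[\sigma_a(b)=-a+a\circ b,\qquad \sigma_{\sigma_a(b)}(\tau_b(a))=a.\] Then $w_0$ is a central element of ${\cal A}$, where $0$ is the common neutral element of $(X,+)$ and $(X,\circ)$.
   Context: The special set-theoretic Yang–Baxter algebra ${\cal A}$ is the unital associative $k$-algebra generated by $1_{\cal A},h_a,w_a,w_a^{-1}$ ($a\in X$) subject to, for all $a,b\in X$: $h_ah_b=\delta_{a,b}h_a$, $w_a^{-1}w_a=w_aw_a^{-1}=1_{\cal A}$, $w_aw_b=w_{\sigma_a(b)}w_{\tau_b(a)}$, $w_ah_b=h_{\sigma_a(b)}w_a$, and $\sum_{a\in X}h_a=1_{\cal A}$. A skew (left) brace is a set $X$ with two group operations $+$ and $\circ$ such that $a\circ(b+c)=a\circ b-a+a\circ c$ for all $a,b,c\in X$; the neutral elements of the two groups coincide and are denoted $0$. *)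

(* Defs.v *)
From HB Require Import structures.
From mathcomp Require Import all_boot all_order all_algebra.
Set Implicit Arguments. Unset Strict Implicit. Unset Printing Implicit Defensive.
Import GRing.Theory.
Local Open Scope ring_scope.

Definition is_group (X : Type) (op : X -> X -> X) (e : X) (inv : X -> X) : Prop :=
  [/\ forall a b c, op a (op b c) = op (op a b) c,
      forall a, op e a = a, forall a, op a e = a,
      forall a, op (inv a) a = e & forall a, op a (inv a) = e].

Definition is_skew_brace (X : Type) (add : X -> X -> X) (neg : X -> X)
    (circ : X -> X -> X) (cinv : X -> X) (zero : X) : Prop :=
  [/\ is_group add zero neg, is_group circ zero cinv &
      forall a b c, circ a (add b c) = add (add (circ a b) (neg a)) (circ a c)].

(* The defining relations of the special set-theoretic Yang-Baxter algebra,
   realised by the families h, w, winv in a k-algebra B. *)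
Definition YB_relations (k : fieldType) (X : finType) (sigma tau : X -> X -> X)
    (B : algType k) (h w winv : X -> B) : Prop :=
  (forall a b, h a * h b = (if a == b then h a else 0)) /\
  (forall a, winv a * w a = 1) /\ (forall a, w a * winv a = 1) /\
  (forall a b, w a * w b = w (sigma a b) * w (tau b a)) /\
  (forall a b, w a * h b = h (sigma a b) * w a) /\
  (\sum_(a : X) h a = 1).

Inductive in_gen_subalg (k : fieldType) (X : finType) (B : algType k)
    (h w winv : X -> B) : B -> Prop :=
  | gen_scal (c : k) : in_gen_subalg h w winv (c%:A)
  | gen_h a : in_gen_subalg h w winv (h a)
  | gen_w a : in_gen_subalg h w winv (w a)
  | gen_winv a : in_gen_subalg h w winv (winv a)
  | gen_add x y : in_gen_subalg h w winv x -> in_gen_subalg h w winv y ->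
                  in_gen_subalg h w winv (x + y)
  | gen_mul x y : in_gen_subalg h w winv x -> in_gen_subalg h w winv y ->
                  in_gen_subalg h w winv (x * y).

(* Main.v *)
Require Import Defs.
From HB Require Import structures.
From mathcomp Require Import all_boot all_order all_algebra.
Import GRing.Theory.
Local Open Scope ring_scope.

Theorem lemma2p15 (k : fieldType) (X : finType)
    (sigma tau : X -> X -> X)
    (add : X -> X -> X) (neg : X -> X) (circ : X -> X -> X) (cinv : X -> X)
    (zero : X)
    (Hsigma_bij : forall a, bijective (sigma a))
    (Hbrace : is_skew_brace add neg circ cinv zero)
    (Hsigma : forall a b, sigma a b = add (neg a) (circ a b))
    (Htau : forall a b, sigma (sigma a b) (tau b a) = a)
    (B : algType k) (h w winv : X -> B)
    (Hrel : YB_relations sigma tau h w winv) :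
  forall x : B, in_gen_subalg h w winv x -> w zero * x = x * w zero.
Proof.
case: Hbrace => [[aA a0 a0' aV aV'] [cA c0 c0' cV cV'] _].
case: Hrel => [Hh [Hiw [Hwi [Hww [Hwh _]]]]].
have n0 : neg zero = zero by rewrite -[neg zero]a0' aV.
have s0 b : sigma zero b = b by rewrite Hsigma n0 c0 a0.
have sb0 b : sigma b zero = zero by rewrite Hsigma c0' aV.
have t0 b : tau b zero = zero.
  have := Htau zero b; rewrite s0 -{2}(sb0 b) => E.
  exact: (bij_inj (Hsigma_bij b) E).
have ww b : w zero * w b = w b * w zero by rewrite Hww s0 t0.
move=> x; elim=> {x} [c|a|a|a|x y _ IHx _ IHy|x y _ IHx _ IHy].
- by rewrite mulr_algl mulr_algr.
- by rewrite Hwh s0.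
- exact: ww.
- rewrite -[w zero * winv a]mul1r -(Hiw a) -!mulrA; congr (_ * _).
  by rewrite !mulrA -ww -!mulrA Hwi mulr1.
- by rewrite mulrDr mulrDl IHx IHy.
- by rewrite mulrA IHx -mulrA IHy mulrA.
Qed.
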